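(* For each $\alpha\in(0,1)$, the zeta probability $Z_\alpha$, defined by $Z_\alpha(0)=0$ and $Z_\alpha(k)=\zeta(1+\alpha)^{-1}k^{-1-\alpha}$ for $k\in\mathbb{N}$, belongs to $\mathcal{A}$.
   Context: $\zeta(s)=\sum_{n\ge1}n^{-s}$ for $s>1$. $\mathbb{P}(\mathbb{Z}^+)$ is the set of functions $F:\mathbb{Z}\to[0,1]$ with $\sum_kF(k)=1$ and $F(k)=0$ for $k<0$; $F^{(n)}$ is the $n$-th convolution power ($(F_1*F_2)(m)=\sum_kF_1(k)F_2(m-k)$). $\mathcal{A}=\{F\in\mathbb{P}(\mathbb{Z}^+):\sup_{n\in\mathbb{N}}n\sum_k|F^{(n)}(k)-F^{(n+1)}(k)|<\infty\}$. *)

(* Defs.v *)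
From HB Require Import structures.
From mathcomp Require Import all_boot all_order all_algebra.
From mathcomp Require Import all_classical all_reals all_analysis.
Set Implicit Arguments. Unset Strict Implicit. Unset Printing Implicit Defensive.
Import Order.TTheory GRing.Theory Num.Theory.
Import numFieldNormedType.Exports.
Local Open Scope ring_scope.

Definition zeta {R : realType} (s : R) : R :=
  limn (series (fun n : nat => (n.+1)%:R `^ (- s))).

(* Functions in P(Z^+) vanish on negative integers; we represent them by
   their restriction to nat (the values at k >= 0). *)
Definition probZp {R : realType} (F : nat -> R) : Prop :=
  (forall k, 0 <= F k <= 1) /\
  (\sum_(0 <= k <oo) (F k)%:E)%E = 1%E.

(* Convolution on Z restricted to functions supported on Z^+: the sum over
   k in Z reduces to k = 0..m. *)
Definition conv {R : realType} (F1 F2 : nat -> R) : nat -> R :=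
  fun m => \sum_(k < m.+1) F1 k * F2 (m - k)%N.

Definition delta0 {R : realType} : nat -> R := fun k => if k == 0%N then 1 else 0.

Fixpoint conv_pow {R : realType} (F : nat -> R) (n : nat) : nat -> R :=
  match n with
  | 0%N => delta0
  | n'.+1 => conv F (conv_pow F n')
  end.

(* The class A: sup_n n * sum_k |F^(n)(k) - F^(n+1)(k)| < oo
   (the series has nonnegative terms; taken in the extended reals). *)
Definition classA {R : realType} (F : nat -> R) : Prop :=
  probZp F /\
  exists C : R, forall n : nat,
    ((n%:R)%:E * \sum_(0 <= k <oo) (`|conv_pow F n k - conv_pow F n.+1 k|)%:E
      <= C%:E)%E.

Definition zeta_prob {R : realType} (alpha : R) : nat -> R :=
  fun k => if k == 0%N then 0 else (zeta (1 + alpha))^-1 * k%:R `^ (- 1 - alpha).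

(* Main.v *)
Require Import Defs.
From mathcomp Require Import all_boot all_order all_algebra.
From mathcomp Require Import all_classical all_reals all_analysis.
From mathcomp Require Import ring lra.
Set Implicit Arguments. Unset Strict Implicit. Unset Printing Implicit Defensive.
Import Order.TTheory GRing.Theory Num.Theory.
Import numFieldNormedType.Exports.
Local Open Scope ring_scope.


Section PolyNorm.
Variable R : realType.
Implicit Types p q : {poly R}.

Definition nrm (B : nat) p : R := \sum_(i < B) `|p`_i|.

Lemma nrm_ge0 B p : 0 <= nrm B p.
Proof. by apply: sumr_ge0 => i _. Qed.

Lemma nrmD B p q : nrm B (p + q) <= nrm B p + nrm B q.
Proof.
rewrite /nrm -big_split /=; apply: ler_sum => i _; rewrite coefD; exact: ler_normD.
Qed.

Lemma nrmZ B c p : nrm B (c *: p) = `|c| * nrm B p.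
Proof. by rewrite /nrm mulr_sumr; apply: eq_bigr => i _; rewrite coefZ normrM. Qed.

Lemma nrmN B p : nrm B (- p) = nrm B p.
Proof. by rewrite /nrm; apply: eq_bigr => i _; rewrite coefN normrN. Qed.

Lemma nrmB B p q : nrm B (p - q) <= nrm B p + nrm B q.
Proof. by rewrite -(nrmN B q); exact: nrmD. Qed.

Lemma nrm0 B : nrm B 0 = 0.
Proof. by rewrite /nrm big1 // => i _; rewrite coef0 normr0. Qed.

Lemma nrm_sum B (I : Type) (r : seq I) (P : pred I) (F : I -> {poly R}) :
  nrm B (\sum_(i <- r | P i) F i) <= \sum_(i <- r | P i) nrm B (F i).
Proof.
apply: (big_ind2 (fun x y => nrm B x <= y)).
- by rewrite nrm0.
- move=> x1 x2 y1 y2 h1 h2; apply: le_trans (nrmD _ _ _) _; exact: lerD.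
- by [].
Qed.

Lemma tri_sum (a b : nat -> R) (B : nat) :
  \sum_(k < B) \sum_(j < k.+1) a j * b (k - j)%N =
  \sum_(j < B) a j * \sum_(l < (B - j)%N) b l.
Proof.
elim: B => [|B IH]; first by rewrite !big_ord0.
rewrite big_ord_recr /= IH.
rewrite [RHS]big_ord_recr /= subSnn big_ord1.
rewrite [X in _ = X + _](_ : _ = \sum_(j < B) (a j * \sum_(l < (B - j)%N) b l + a j * b (B - j)%N)); last first.
  apply: eq_bigr => j _; rewrite subSn; last by apply: ltnW.
  by rewrite big_ord_recr /= mulrDr.
rewrite big_split /= -addrA; congr (_ + _).
by rewrite [LHS]big_ord_recr /= subnn.
Qed.

Lemma nrmM B p q : nrm B (p * q) <= nrm B p * nrm B q.
Proof.
rewrite /nrm.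
apply: (@le_trans _ _ (\sum_(k < B) \sum_(j < k.+1) `|p`_j| * `|q`_(k - j)|)).
  apply: ler_sum => k _; rewrite coefM.
  apply: le_trans (ler_norm_sum _ _ _) _.
  by apply: ler_sum => j _; rewrite normrM.
rewrite (tri_sum (fun j => `|p`_j|) (fun l => `|q`_l|)) mulr_suml.
apply: ler_sum => j _; apply: ler_wpM2l => //.
rewrite (big_ord_widen _ (fun l => `|q`_l|) (leq_subr j B)).
rewrite [X in _ <= X](bigID (fun i : 'I_B => (i < B - j)%N)) /= lerDl.
by apply: sumr_ge0 => i _.
Qed.

Lemma nrmXn B j : nrm B ('X^j) <= 1.
Proof.
rewrite /nrm; elim: B => [|B IH]; first by rewrite big_ord0.
rewrite big_ord_recr /= coefXn.
case: (eqVneq B j) => [<-|hne]; last by rewrite normr0 addr0.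
rewrite normr1 (_ : \sum_(i < B) _ = 0) ?add0r //.
apply: big1 => i _; rewrite coefXn.
by rewrite (_ : (i == B :> nat) = false) ?normr0 // ltn_eqF.
Qed.

Lemma nrm1 B : nrm B 1 <= 1.
Proof. by have := nrmXn B 0; rewrite expr0. Qed.

Lemma nrmX B p : nrm B p <= 1 -> forall k, nrm B (p ^+ k) <= 1.
Proof.
move=> h; elim=> [|k IH]; first by rewrite expr0 nrm1.
rewrite exprS; apply: le_trans (nrmM _ _ _) _.
by rewrite -[1]mul1r; apply: ler_pM => //; apply: nrm_ge0.
Qed.

Lemma nrmXle B p c k : nrm B p <= c -> nrm B (p ^+ k) <= c ^+ k.
Proof.
move=> h; elim: k => [|k IH]; first by rewrite !expr0 nrm1.
rewrite !exprS; apply: le_trans (nrmM _ _ _) _.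
apply: ler_pM => //; apply: nrm_ge0.
Qed.


Definition Phi (N : nat) (t : R) : R := t ^+ N - N%:R / N.+1%:R * t ^+ N.+1.

Lemma Phi_step (N : nat) (a b : R) : 0 <= a -> a <= b ->
  (1 - b) * (b ^+ N - a ^+ N) <= Phi N b - Phi N a.
Proof.
move=> a0 ab; have b0 : 0 <= b by apply: le_trans ab.
set X := b ^+ N; set Y := a ^+ N.
have hD : 0 <= b * X - N.+1%:R * b * Y + N%:R * a * Y.
  have e1 : b * X - a * Y = (b - a) * \sum_(i < N.+1) b ^+ (N - i) * a ^+ i.
    by rewrite /X /Y -!exprS subrXX.
  have e2 : N.+1%:R * Y <= \sum_(i < N.+1) b ^+ (N - i) * a ^+ i.
    have -> : N.+1%:R * Y = \sum_(i < N.+1) Y by rewrite sumr_const card_ord mulr_natl.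
    apply: ler_sum => i _; rewrite /Y.
    have hi : (i + (N - i) = N)%N by rewrite subnKC // -ltnS.
    rewrite -[in X in X <= _]hi exprD mulrC.
    by apply: ler_wpM2r; [apply: exprn_ge0|apply: lerXn2r; rewrite ?nnegrE].
  have -> : b * X - N.+1%:R * b * Y + N%:R * a * Y =
            (b * X - a * Y) - N.+1%:R * Y * (b - a).
    by rewrite -natr1; ring.
  rewrite e1 subr_ge0 mulrC; apply: ler_wpM2l; first by rewrite subr_ge0.
  exact: e2.
have hN : 0 < N.+1%:R :> R by rewrite ltr0n.
rewrite /Phi !exprS -/X -/Y.
have -> : X - N%:R / N.+1%:R * (b * X) - (Y - N%:R / N.+1%:R * (a * Y)) =
  (1 - b) * (X - Y) + (b * X - N.+1%:R * b * Y + N%:R * a * Y) / N.+1%:R.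
  rewrite -natr1; field; rewrite natr1; exact: lt0r_neq0.
by rewrite lerDl divr_ge0 // ltW.
Qed.

Lemma sum_widen_le (w : nat -> R) (j L : nat) : (forall i, 0 <= w i) -> (j <= L)%N ->
  \sum_(i < j) w i <= \sum_(i < L) w i.
Proof.
move=> hw hj; rewrite (big_ord_widen _ w hj).
rewrite [X in _ <= X](bigID (fun i : 'I_L => (i < j)%N)) /= lerDl.
by apply: sumr_ge0.
Qed.

Lemma core B L (u : nat -> {poly R}) (w : nat -> R) (kappa : R) n :
  (forall j, 0 <= w j) -> (forall j, nrm B (u j) <= 1) ->
  \sum_(j < L) w j <= 1 -> 0 <= kappa ->
  (forall j, (j < L)%N -> nrm B ((1 - \sum_(i < L) w i *: u i) * u j)
       <= kappa * (1 - \sum_(i < j.+1) w i)) ->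
  nrm B ((1 - \sum_(i < L) w i *: u i) * (\sum_(i < L) w i *: u i) ^+ n.+1)
    <= kappa / n.+2%:R.
Proof.
move=> hw hu hs hk hE.
set P := \sum_(i < L) w i *: u i.
pose Q j := \sum_(i < j) w i *: u i.
pose q j := \sum_(i < j) w i.
set N := n.+1.
have q0 j : 0 <= q j by apply: sumr_ge0.
have qS j : q j.+1 = q j + w j by rewrite /q big_ord_recr.
have QS j : Q j.+1 = Q j + w j *: u j by rewrite /Q big_ord_recr.
have nQ j : nrm B (Q j) <= q j.
  apply: le_trans (nrm_sum _ _ _ _) _; apply: ler_sum => i _.
  rewrite nrmZ ger0_norm // -[X in _ <= X]mulr1; exact: ler_wpM2l.
have qL j : (j <= L)%N -> q j <= 1 by move=> hj; apply: le_trans hs; apply: sum_widen_le.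
have tel : P ^+ N = \sum_(j < L) (Q j.+1 ^+ N - Q j ^+ N).
  rewrite -(big_mkord xpredT (fun j => Q j.+1 ^+ N - Q j ^+ N)).
  rewrite telescope_sumr // /Q big_ord0 expr0n /= subr0 //.
have step j : (j < L)%N -> nrm B ((1 - P) * (Q j.+1 ^+ N - Q j ^+ N))
    <= kappa * ((1 - q j.+1) * (q j.+1 ^+ N - q j ^+ N)).
  move=> hj.
  rewrite subrXX QS addrAC subrr add0r.
  rewrite [q _ ^+ _ - _]subrXX qS addrAC subrr add0r.
  rewrite -scalerAl -scalerAr nrmZ ger0_norm // mulrA -QS -qS.
  rewrite [X in _ <= X](_ : _ = w j * (kappa * (1 - q j.+1) * \sum_(i < N) q j.+1 ^+ (N.-1 - i) * q j ^+ i)); last by ring.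
  apply: ler_wpM2l => //.
  apply: le_trans (nrmM _ _ _) _.
  apply: ler_pM; [exact: nrm_ge0|exact: nrm_ge0|exact: (hE j hj)|].
  apply: le_trans (nrm_sum _ _ _ _) _; apply: ler_sum => i _.
  apply: le_trans (nrmM _ _ _) _.
  by apply: ler_pM; [exact: nrm_ge0|exact: nrm_ge0| |]; apply: nrmXle.
rewrite tel mulr_sumr.
apply: le_trans (nrm_sum _ _ _ _) _.
apply: (@le_trans _ _ (\sum_(j < L) kappa * (Phi N (q j.+1) - Phi N (q j)))).
  apply: ler_sum => j _; apply: le_trans (step j (ltn_ord j)) _.
  apply: ler_wpM2l => //; apply: Phi_step => //; rewrite qS lerDl //.
rewrite -mulr_sumr -(big_mkord xpredT (fun j => Phi N (q j.+1) - Phi N (q j))).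
rewrite telescope_sumr //.
have -> : Phi N (q 0) = 0 by rewrite /q big_ord0 /Phi !expr0n /= !mulr0 subr0.
rewrite subr0; apply: ler_wpM2l => //.
have := Phi_step N (q0 L) (qL L (leqnn L)).
rewrite subrr mul0r subr_ge0 => h; apply: le_trans h _.
rewrite /Phi !expr1n mulr1 /N.
rewrite le_eqVlt; apply/orP; left; apply/eqP.
have h2 : n.+2%:R != 0 :> R by rewrite pnatr_eq0.
apply: (mulfI h2); rewrite mulrBr mulr1 mulrCA !mulfV // mulr1.
by rewrite -[n.+2]addn1 natrD addrAC subrr add0r.
Qed.

End PolyNorm.


Section RealFacts.
Variable R : realType.

Lemma young (x b : R) : 0 <= x -> 0 < b -> b < 1 -> x `^ b <= b * x + (1 - b).
Proof.
move=> x0 b0 b1.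
have b1' : 0 < 1 - b by rewrite subr_gt0.
have p0 : 0 < b^-1 by rewrite invr_gt0.
have q0 : 0 < (1 - b)^-1 by rewrite invr_gt0.
have := @conjugate_powR R (x `^ b) 1 (b^-1) ((1 - b)^-1) (powR_ge0 _ _) ler01
  p0 q0 ltac:(by rewrite !invrK addrC subrK).
rewrite mulr1 -powRrM mulfV ?gt_eqF // powRr1 // powR1 !invrK.
by rewrite mul1r [x * b]mulrC.
Qed.

Lemma powRN_le (e x y : R) : 0 <= e -> 0 < x -> x <= y -> y `^ (- e) <= x `^ (- e).
Proof.
move=> e0 x0 xy; rewrite !powRN.
rewrite lef_pV2 ?posrE ?powR_gt0 //; last by apply: lt_le_trans xy.
by apply: ge0_ler_powR => //; rewrite nnegrE; [exact: ltW | exact: ltW (lt_le_trans x0 xy)].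
Qed.

Lemma powR_mulself (x e : R) : 0 < x -> x * x `^ (- 1 - e) = x `^ (- e).
Proof.
move=> x0.
have h : x `^ (1 + (- 1 - e)) = x * x `^ (- 1 - e).
  rewrite (@powRD _ x 1 (- 1 - e)); last by rewrite (gt_eqF x0) implybT.
  by rewrite powRr1 // ltW.
by rewrite -h; congr (_ `^ _); ring.
Qed.

Variable a : R.
Hypothesis a0 : 0 < a.
Hypothesis a1 : a < 1.

Lemma R2 (k : nat) : (1 <= k)%N ->
  a * k.+1%:R `^ (- 1 - a) <= k%:R `^ (- a) - k.+1%:R `^ (- a).
Proof.
move=> k1.
set t : R := k%:R; set c : R := k.+1%:R.
have t0 : 0 < t by rewrite /t ltr0n.
have c0 : 0 < c by rewrite /c ltr0n.
have tc : t <= c by rewrite /t /c ler_nat.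
set A := t `^ a; set Bb := c `^ a.
have A0 : 0 < A by apply: powR_gt0.
have B0 : 0 < Bb by apply: powR_gt0.
have AB : A <= Bb by apply: ge0_ler_powR => //; rewrite ?nnegrE ltW.
have y0 : 0 <= t / c by apply: divr_ge0; apply: ltW.
have hy := young y0 a0 a1.
have eA : A = (t / c) `^ a * Bb.
  rewrite /A /Bb -powRM ?(ltW c0) //.
  by rewrite divfK // gt_eqF.
have key : c * A <= (c - a) * Bb.
  rewrite eA mulrA; apply: ler_wpM2r; first exact: ltW.
  apply: le_trans (ler_wpM2l (ltW c0) hy) _; rewrite le_eqVlt; apply/orP; left; apply/eqP.
  rewrite /t /c -natr1; field; rewrite natr1 gt_eqF //.
have -> : - 1 - a = - (1 + a) by ring.
rewrite !powRN -/A -/Bb (@powRD _ c 1 a); last by rewrite (gt_eqF c0) implybT.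
rewrite powRr1 ?(ltW c0) // -/Bb.
rewrite -subr_ge0.
have -> : A^-1 - Bb^-1 - a * (c * Bb)^-1 = (c * (Bb - A) - a * A) / (c * A * Bb).
  by field; rewrite !gt_eqF.
apply: divr_ge0; last by apply: ltW; rewrite !mulr_gt0.
have h : 0 <= a * (Bb - A) by apply: mulr_ge0; [exact: ltW| rewrite subr_ge0].
nra.
Qed.

Lemma R3 (k : nat) :
  (1 - a) * k.+1%:R `^ (- a) <= k.+1%:R `^ (1 - a) - k%:R `^ (1 - a).
Proof.
set t : R := k%:R; set c : R := k.+1%:R.
have t0 : 0 <= t by rewrite /t ler0n.
have c0 : 0 < c by rewrite /c ltr0n.
have b1 : 1 - a < 1 by rewrite ltrBlDr ltrDl.
have b0 : 0 < 1 - a by rewrite subr_gt0.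
set b := 1 - a.
set Cm := c `^ (- a).
have Cm0 : 0 < Cm by apply: powR_gt0.
have eC : c `^ b = c * Cm.
  by rewrite /b /Cm -[1 - a]/(1 + - a) powRD ?implybT ?gt_eqF // powRr1 ?ltW.
have y0 : 0 <= t / c by apply: divr_ge0 => //; apply: ltW.
have hy := young y0 b0 b1.
have eT : t `^ b = (t / c) `^ b * c `^ b.
  by rewrite -powRM ?(ltW c0) // divfK // gt_eqF.
rewrite eT eC -subr_ge0.
have e2 : c * Cm - (t / c) `^ b * (c * Cm) - b * Cm = Cm * (c - c * (t / c) `^ b - b) by ring.
rewrite e2; apply: mulr_ge0; first exact: ltW.
have : c * (t / c) `^ b <= c * (b * (t / c) + (1 - b)) by apply: ler_wpM2l => //; apply: ltW.
have -> : c * (b * (t / c) + (1 - b)) = c - b.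
  by rewrite /t /c -natr1; field; rewrite natr1 pnatr_eq0.
move=> h; clearbody t c b Cm; lra.
Qed.

Lemma S1 (m : nat) :
  \sum_(k < m) k.+1%:R `^ (- a) <= m%:R `^ (1 - a) / (1 - a).
Proof.
have b0 : 0 < 1 - a by rewrite subr_gt0.
rewrite ler_pdivlMr // mulr_suml.
apply: (@le_trans _ _ (\sum_(k < m) (k.+1%:R `^ (1 - a) - k%:R `^ (1 - a)))).
  by apply: ler_sum => k _; rewrite mulrC; apply: R3.
rewrite -(big_mkord xpredT (fun k => k.+1%:R `^ (1 - a) - k%:R `^ (1 - a))).
by rewrite telescope_sumr // powR0 ?subr0 // gt_eqF.
Qed.

Lemma S2 (m M : nat) : (1 <= m)%N ->
  \sum_(m <= k < M) k.+1%:R `^ (- 1 - a) <= m%:R `^ (- a) / a.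
Proof.
move=> m1; rewrite ler_pdivlMr // mulr_suml.
case: (leqP m M) => hmM; last first.
  by rewrite big_geq; [exact: powR_ge0 | exact: ltnW].
apply: (@le_trans _ _ (\sum_(m <= k < M) (k%:R `^ (- a) - k.+1%:R `^ (- a)))).
  rewrite big_nat_cond [X in _ <= X]big_nat_cond; apply: ler_sum => k /andP[/andP[hk _] _].
  by rewrite mulrC; apply: R2; apply: leq_trans hk.
have -> : \sum_(m <= k < M) (k%:R `^ (- a) - k.+1%:R `^ (- a)) =
   - \sum_(m <= k < M) (k.+1%:R `^ (- a) - k%:R `^ (- a)).
  by rewrite -sumrN; apply: eq_bigr => k _; rewrite opprB.
by rewrite telescope_sumr // opprB gerBl powR_ge0.
Qed.

End RealFacts.


Lemma aux_m2 (R : realType) (a : R) : a < 1 -> - 2 <= - 1 - a.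
Proof. move=> h; lra. Qed.

Section Zeta.
Variable R : realType.
Variable a : R.
Hypothesis a0 : 0 < a.
Hypothesis a1 : a < 1.

Let g := fun n : nat => (n.+1)%:R `^ (- (1 + a)) : R.

Lemma g_eq n : g n = n.+1%:R `^ (- 1 - a).
Proof. by rewrite /g opprD. Qed.

Lemma ser_le N : series g N <= 1 + a^-1.
Proof.
rewrite /series /=.
case: N => [|N]; first by rewrite big_geq // addr_ge0 // invr_ge0 ltW.
rewrite big_ltn // g_eq powR1 /=.
apply: lerD => //.
under eq_bigr do rewrite g_eq.
by have := @S2 R a a0 a1 1 N.+1 (leqnn 1); rewrite powR1 mul1r.
Qed.

Lemma ser_nd : nondecreasing_seq (series g).
Proof.
move=> m n mn; rewrite /series /=.
have := @nondecreasing_series R g xpredT 0 (fun k _ _ => powR_ge0 _ _) m n mn.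
by [].
Qed.

Lemma ser_cvg : cvgn (series g : nat -> R).
Proof.
apply: (@nondecreasing_is_cvgn R (series g)); first exact: ser_nd.
by exists (1 + a^-1) => _ [N _ <-]; apply: ser_le.
Qed.

Lemma ser_le_z N : series g N <= zeta (1 + a).
Proof. exact: (nondecreasing_cvgn_le ser_nd ser_cvg). Qed.

Lemma z_ge1 : 1 <= zeta (1 + a).
Proof.
apply: le_trans (ser_le_z 1).
by rewrite /series /= big_nat1 /g powR1.
Qed.

Lemma z_gt0 : 0 < zeta (1 + a).
Proof. exact: lt_le_trans ltr01 z_ge1. Qed.

Notation F := (zeta_prob a).
Notation z := (zeta (1 + a)).

Lemma F0 : F 0 = 0.
Proof. by rewrite /zeta_prob. Qed.

Lemma FS k : F k.+1 = z^-1 * k.+1%:R `^ (- 1 - a).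
Proof. by []. Qed.

Lemma F_ge0 k : 0 <= F k.
Proof.
case: k => [|k]; first by rewrite F0.
by rewrite FS mulr_ge0 ?powR_ge0 // invr_ge0 ltW // z_gt0.
Qed.

Lemma F_le (i j : nat) : (1 <= i)%N -> (i <= j)%N -> F j <= F i.
Proof.
case: i => // i _; case: j => // j hij.
rewrite !FS; apply: ler_wpM2l; first by rewrite invr_ge0 ltW // z_gt0.
have -> : - 1 - a = - (1 + a) by ring.
apply: powRN_le; [by rewrite addr_ge0 // ltW|by rewrite ltr0n|by rewrite ler_nat].
Qed.

Definition PF N := \sum_(k < N) F k.

Lemma PF_S N : PF N.+1 = z^-1 * series g N.
Proof.
rewrite /PF big_ord_recl F0 add0r /series /= big_mkord mulr_sumr.
by apply: eq_bigr => i _; rewrite FS g_eq.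
Qed.

Lemma PF_le1 N : PF N <= 1.
Proof.
case: N => [|N]; first by rewrite /PF big_ord0.
rewrite PF_S ler_pdivrMl ?z_gt0 // mulr1; exact: ser_le_z.
Qed.

Lemma PF_mono i j : (i <= j)%N -> PF i <= PF j.
Proof. by move=> hij; apply: sum_widen_le => // k; apply: F_ge0. Qed.

Lemma tail_lower (m : nat) : (1 <= m)%N ->
  z^-1 * m%:R `^ (- a) / 4 <= 1 - PF m.+1.
Proof.
move=> m1.
apply: (@le_trans _ _ (PF (m.*2).+1 - PF m.+1)); last by rewrite lerB // PF_le1.
have -> : PF (m.*2).+1 - PF m.+1 = \sum_(m.+1 <= k < (m.*2).+1) F k.
  rewrite /PF -!(big_mkord xpredT) [X in X - _](@big_cat_nat _ _ _ m.+1) //=.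
    by rewrite addrAC subrr add0r.
  by rewrite ltnS -addnn leq_addr.
apply: (@le_trans _ _ (\sum_(m.+1 <= k < (m.*2).+1) F (m.*2))).
  rewrite sumr_const_nat subSS (_ : (m.*2 - m = m)%N); last by rewrite -addnn addnK.
  have e2 : (m.*2)%:R = 2 * m%:R :> R by rewrite -addnn natrD; ring.
  have -> : F (m.*2) = z^-1 * (m.*2)%:R `^ (- 1 - a).
    by case: m m1 {e2} => // m _; rewrite doubleS FS.
  have hm0 : 0 < m%:R :> R by rewrite ltr0n.
  rewrite e2 (@powRM _ 2 m%:R) ?ler0n // -[X in _ <= X]mulr_natl.
  rewrite (_ : m%:R * (z^-1 * (2 `^ (-1 - a) * m%:R `^ (-1 - a))) =
     z^-1 * (2 `^ (-1 - a) * (m%:R * m%:R `^ (-1 - a)))); last by ring.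
  rewrite powR_mulself // -mulrA; apply: ler_wpM2l.
    by rewrite invr_ge0 ltW // z_gt0.
  rewrite mulrC; apply: ler_wpM2r; first exact: powR_ge0.
  have h4 : 2 `^ (-2) = 4^-1 :> R.
    by rewrite powRN powR_mulrn // expr2 -natrM.
  rewrite -h4; apply: ler_powR; first by rewrite ler1n.
  exact: aux_m2.
rewrite big_nat_cond [X in _ <= X]big_nat_cond; apply: ler_sum => k /andP[/andP[hk1 hk2] _].
apply: F_le; first by apply: leq_trans hk1.
by rewrite -ltnS.
Qed.

End Zeta.


Section Mix.
Variable R : realType.

Definition Gp (n : nat) : {poly R} := \sum_(i < n) 'X^i.

Lemma nrm_XG B n : nrm B ('X * Gp n) <= n%:R.
Proof.
apply: le_trans (nrmM _ _ _) _; rewrite -[n%:R]mul1r.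
apply: ler_pM; [exact: nrm_ge0|exact: nrm_ge0| |].
  by have := @nrmXn R B 1; rewrite expr1.
apply: le_trans (nrm_sum _ _ _ _) _.
apply: le_trans (_ : \sum_(i < n) (1 : R) <= _); first by apply: ler_sum => i _; exact: nrmXn.
by rewrite sumr_const card_ord.
Qed.

Lemma abel_poly (h : nat -> R) L :
  \sum_(j < L) (h j.+1 - h j.+2) *: ('X * Gp j.+1) =
  \sum_(x < L) h x.+1 *: 'X^(x.+1) - h L.+1 *: ('X * Gp L).
Proof.
elim: L => [|L IH]; first by rewrite !big_ord0 /Gp big_ord0 mulr0 scaler0 subrr.
rewrite big_ord_recr /= IH [in RHS]big_ord_recr /=.
rewrite /Gp big_ord_recr /= scalerBl.
rewrite mulrDr exprS scalerDr.
by rewrite -!addrA addKr.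
Qed.

Lemma abel_scal (h : nat -> R) J :
  \sum_(i < J) i.+1%:R * (h i.+1 - h i.+2) =
  \sum_(x < J) h x.+1 - J%:R * h J.+1.
Proof.
elim: J => [|J IH]; first by rewrite !big_ord0 mul0r subrr.
rewrite big_ord_recr /= IH [in RHS]big_ord_recr /= -natr1.
ring.
Qed.

Variable a : R.
Hypothesis a0 : 0 < a.
Hypothesis a1 : a < 1.

Notation F := (zeta_prob a).
Notation z := (zeta (1 + a)).

Definition Ppol (L : nat) : {poly R} := \poly_(x < L.+1) F x.
Definition Ft (L x : nat) : R := if (x <= L)%N then F x else 0.
Definition wt (L j : nat) : R := j.+1%:R * (Ft L j.+1 - Ft L j.+2).
Definition ut (j : nat) : {poly R} := (j.+1%:R)^-1 *: ('X * Gp j.+1).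

Lemma Ppol_coef L n k : (k <= L)%N -> (Ppol L ^+ n)`_k = conv_pow F n k.
Proof.
elim: n k => [|n IH] k hk.
  by rewrite expr0 coef1 /= /delta0; case: (k == 0%N).
rewrite exprS coefM /= /conv; apply: eq_bigr => j _.
rewrite IH; last by apply: leq_trans (leq_subr _ _) hk.
rewrite coef_poly ltnS (leq_trans _ hk) //.
by rewrite -ltnS.
Qed.

Lemma Ft_ge0 L x : 0 <= Ft L x.
Proof. by rewrite /Ft; case: ifP => _ //; exact: F_ge0. Qed.

Lemma wt_ge0 L j : 0 <= wt L j.
Proof.
rewrite /wt; apply: mulr_ge0 => //; rewrite subr_ge0 /Ft.
case: (leqP j.+2 L) => h2.
  rewrite (leq_trans (leqnSn _) h2); exact: (F_le a0 a1).
by case: ifP => _ //; exact: F_ge0.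
Qed.

Lemma mixture L : \sum_(j < L) wt L j *: ut j = Ppol L.
Proof.
have -> : \sum_(j < L) wt L j *: ut j =
    \sum_(j < L) (Ft L j.+1 - Ft L j.+2) *: ('X * Gp j.+1).
  apply: eq_bigr => j _; rewrite /wt /ut scalerA mulrAC mulfV ?mul1r //.
rewrite abel_poly /Ft ltnn scale0r subr0 /Ppol poly_def big_ord_recl /= F0 scale0r add0r.
apply: eq_bigr => i _; by rewrite ltn_ord.
Qed.

Lemma wt_sum L J : \sum_(i < J) wt L i <= PF a J.+1.
Proof.
rewrite /wt abel_scal /PF big_ord_recl F0 add0r.
apply: le_trans (_ : \sum_(x < J) Ft L x.+1 <= _).
  by rewrite gerBl mulr_ge0 // Ft_ge0.
apply: ler_sum => i _; rewrite /Ft; case: ifP => _ //; exact: F_ge0.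
Qed.

Lemma ut_nrm B j : nrm B (ut j) <= 1.
Proof.
rewrite /ut nrmZ ger0_norm ?invr_ge0 ?ler0n //.
rewrite ler_pdivrMl ?ltr0n // mulr1; exact: nrm_XG.
Qed.


Lemma one_minus_P L :
  1 - Ppol L = (1 - PF a L.+1) *: 1 + \sum_(x < L.+1) F x *: (1 - 'X^x).
Proof.
under [X in _ = _ + X]eq_bigr do rewrite scalerBr.
rewrite sumrB -scaler_suml /Ppol poly_def /PF scalerBl scale1r.
by rewrite addrA subrK.
Qed.

Lemma one_minus_Xn n : 1 - 'X^n = - (('X - 1) * Gp n) :> {poly R}.
Proof. by rewrite /Gp -subrX1 opprB. Qed.

Lemma b_lin B x j : nrm B ((1 - 'X^x) * ut j) <= 2 * x%:R / j.+1%:R.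
Proof.
have e : (1 - 'X^x) * ut j = (j.+1%:R)^-1 *: ((1 - 'X^(j.+1)) * ('X * Gp x)).
  rewrite /ut -scalerAr; congr (_ *: _).
  rewrite !one_minus_Xn; ring.
rewrite e nrmZ ger0_norm ?invr_ge0 ?ler0n // mulrC.
apply: ler_wpM2r; first by rewrite invr_ge0 ler0n.
apply: le_trans (nrmM _ _ _) _.
apply: ler_pM; [exact: nrm_ge0|exact: nrm_ge0| |exact: nrm_XG].
apply: le_trans (nrmB _ _ _) _.
have := @nrm1 R B; have := @nrmXn R B j.+1; lra.
Qed.

Lemma b_two B x j : nrm B ((1 - 'X^x) * ut j) <= 2.
Proof.
apply: le_trans (nrmM _ _ _) _; rewrite -[2]mulr1.
apply: ler_pM; [exact: nrm_ge0|exact: nrm_ge0| |exact: ut_nrm].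
apply: le_trans (nrmB _ _ _) _.
have := @nrm1 R B; have := @nrmXn R B x; lra.
Qed.

Lemma sum1_bound m : (1 <= m)%N ->
  \sum_(0 <= x < m.+1) F x * (2 * x%:R / m%:R)
    <= 2 * (z^-1 * m%:R `^ (- a)) * (1 - a)^-1.
Proof.
move=> m1.
have z0 := z_gt0 a0 a1.
have hm : 0 < m%:R :> R by rewrite ltr0n.
rewrite big_nat_recl // F0 mul0r add0r.
have e : forall x : nat, F x.+1 * (2 * x.+1%:R / m%:R) =
    (2 / (m%:R * z)) * x.+1%:R `^ (- a).
  move=> x; rewrite FS -(@powR_mulself R x.+1%:R a) ?ltr0n //.
  by field; rewrite !gt_eqF.
under eq_bigr do rewrite e.
rewrite -mulr_sumr big_mkord.
apply: le_trans (ler_wpM2l _ (S1 a0 a1 m)) _.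
  by apply: divr_ge0 => //; apply: mulr_ge0; apply: ltW.
have eC : m%:R `^ (1 - a) = m%:R * m%:R `^ (- a) :> R.
  rewrite (@powRD _ m%:R 1 (- a)); last by rewrite (gt_eqF hm) implybT.
  by rewrite powRr1 // ltW.
rewrite eC le_eqVlt; apply/orP; left; apply/eqP.
have a1' : 1 - a != 0 by rewrite subr_eq0 eq_sym lt_eqF.
by field; rewrite a1' !gt_eqF.
Qed.

Lemma sum2_bound m L : (1 <= m)%N ->
  \sum_(m.+1 <= x < L.+1) F x * 2 <= 2 * (z^-1 * m%:R `^ (- a)) * a^-1.
Proof.
move=> m1.
have z0 := z_gt0 a0 a1.
rewrite big_add1 /= -mulr_suml.
under eq_bigr do rewrite FS.
rewrite -mulr_sumr mulrC -!mulrA; apply: ler_wpM2l => //.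
apply: ler_wpM2l; first by rewrite invr_ge0 ltW.
exact: S2.
Qed.

Definition kappa : R := 1 + 8 * ((1 - a)^-1 + a^-1).

Lemma kappa_ge0 : 0 <= kappa.
Proof.
rewrite /kappa addr_ge0 // mulr_ge0 // addr_ge0 // invr_ge0 ltW //.
by rewrite subr_gt0.
Qed.

Lemma keyE B L j : (j < L)%N ->
  nrm B ((1 - Ppol L) * ut j) <= kappa * (1 - PF a j.+2).
Proof.
move=> hj.
set m := j.+1.
have m1 : (1 <= m)%N by [].
set s := PF a L.+1.
set D := 1 - PF a m.+1.
have hs : 1 - s <= D by rewrite /D lerB // PF_mono // ltnS.
have hs0 : 0 <= 1 - s by rewrite subr_ge0 PF_le1.
have hT := tail_lower a0 a1 m1.
rewrite -/D in hT.
set T := z^-1 * m%:R `^ (- a) in hT *.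
rewrite one_minus_P mulrDl mulr_suml.
apply: le_trans (nrmD _ _ _) _.
rewrite -scalerAl mul1r nrmZ ger0_norm //.
apply: (@le_trans _ _ ((1 - s) + \sum_(x < L.+1) F x * (if (x <= m)%N then 2 * x%:R / m%:R else 2))).
  apply: lerD; first by rewrite -[X in _ <= X]mulr1; apply: ler_wpM2l => //; exact: ut_nrm.
  apply: le_trans (nrm_sum _ _ _ _) _; apply: ler_sum => x _.
  rewrite -scalerAl nrmZ ger0_norm ?F_ge0 //; apply: ler_wpM2l; first exact: F_ge0.
  by case: ifP => _; [exact: b_lin|exact: b_two].
rewrite -(big_mkord (fun _ => true) (fun x => F x * (if (x <= m)%N then 2 * x%:R / m%:R else 2))) (@big_cat_nat _ _ _ m.+1) //=.
have e1 : \sum_(0 <= x < m.+1) F x * (if (x <= m)%N then 2 * x%:R / m%:R else 2) =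
          \sum_(0 <= x < m.+1) F x * (2 * x%:R / m%:R).
  rewrite big_nat_cond [in RHS]big_nat_cond; apply: eq_bigr => x /andP[/andP[_ hx] _].
  by rewrite -ltnS hx.
have e2 : \sum_(m.+1 <= x < L.+1) F x * (if (x <= m)%N then 2 * x%:R / m%:R else 2) =
          \sum_(m.+1 <= x < L.+1) F x * 2.
  rewrite big_nat_cond [in RHS]big_nat_cond; apply: eq_bigr => x /andP[/andP[hx _] _].
  by rewrite leqNgt hx.
rewrite e1 e2.
have h1 := sum1_bound m1.
have h2 := sum2_bound L m1.
rewrite -/T in h1 h2.
have c0 : 0 <= (1 - a)^-1 + a^-1.
  by rewrite addr_ge0 // invr_ge0 ltW // subr_gt0.
have T4 : T <= 4 * D by rewrite mulrC -ler_pdivrMr.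
have T4c : T * ((1 - a)^-1 + a^-1) <= 4 * D * ((1 - a)^-1 + a^-1) by apply: ler_wpM2r.
rewrite /kappa.
move: hs h1 h2 T4c c0.
clearbody m s D T.
generalize ((1 - a)^-1) (a^-1) => c1 c2.
generalize (\sum_(0 <= x < m.+1) F x * (2 * x%:R / m%:R)) (\sum_(m.+1 <= x < L.+1) F x * 2).
move=> S1 S2 hs h1 h2 T4c c0.
nra.
Qed.

End Mix.


Section Final.
Variable R : realType.
Variable a : R.
Hypothesis a0 : 0 < a.
Hypothesis a1 : a < 1.
Notation F := (zeta_prob a).

Lemma partial_bound n K :
  \sum_(k < K) `|conv_pow F n.+1 k - conv_pow F n.+2 k| <= kappa a / n.+2%:R.
Proof.
have e : \sum_(k < K) `|conv_pow F n.+1 k - conv_pow F n.+2 k| =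
    nrm K (Ppol a K ^+ n.+1 - Ppol a K ^+ n.+2).
  rewrite /nrm; apply: eq_bigr => k _.
  by rewrite coefB !Ppol_coef // ltnW.
rewrite e.
have -> : Ppol a K ^+ n.+1 - Ppol a K ^+ n.+2 = (1 - Ppol a K) * Ppol a K ^+ n.+1.
  by rewrite [_ ^+ n.+2]exprS; ring.
rewrite -(mixture a K).
apply: core.
- by move=> j; apply: (wt_ge0 a0 a1).
- by move=> j; apply: ut_nrm.
- by apply: le_trans (wt_sum a0 a1 K K) _; apply: (PF_le1 a0 a1).
- exact: (kappa_ge0 a0 a1).
move=> j hj; rewrite (mixture a K).
apply: le_trans (@keyE R a a0 a1 K K j hj) _.
apply: ler_wpM2l; first exact: (kappa_ge0 a0 a1).
by apply: lerB => //; apply: (wt_sum a0 a1).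
Qed.

End Final.

Theorem theorem5p4 (R : realType) (alpha : R) :
  0 < alpha < 1 -> classA (zeta_prob alpha).
Proof.
move=> /andP[a0 a1].
have z0 := z_gt0 a0 a1.
split.
  split.
    move=> k; rewrite F_ge0 //=.
    apply: le_trans (PF_le1 a0 a1 k.+1).
    by rewrite /PF big_ord_recr /= lerDr; apply: sumr_ge0 => i _; apply: F_ge0.
  have hPS : ((fun N => PF alpha N.+1) @ \oo --> (1 : R))%classic.
    have -> : (fun N => PF alpha N.+1) = (fun N => (zeta (1 + alpha))^-1 *
        series (fun n : nat => n.+1%:R `^ (- (1 + alpha))) N).
      by apply: funext => N; rewrite PF_S.
    have h := @cvgMl_tmp R nat (\oo)%classic _ (series (fun n : nat => n.+1%:R `^ (- (1 + alpha))))
      ((zeta (1 + alpha))^-1) _ (ser_cvg a0 a1).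
    rewrite mulVf ?(lt0r_neq0 z0) // in h; apply: h.
  have hP : (PF alpha @ \oo --> (1 : R))%classic by rewrite -cvg_shiftS.
  have -> : (fun n => \sum_(0 <= k < n) (zeta_prob alpha k)%:E) = EFin \o PF alpha.
    by apply: funext => n; rewrite sumEFin big_mkord.
  rewrite EFin_lim; last by apply/cvg_ex; exists 1.
  by rewrite (cvg_lim _ hP).
exists (kappa alpha) => n.
case: n => [|n]; first by rewrite mul0e lee_fin (kappa_ge0 a0 a1).
apply: le_trans (_ : (n.+1%:R)%:E * (kappa alpha / n.+2%:R)%:E <= _)%E.
  apply: lee_wpmul2l; first by rewrite lee_fin ler0n.
  apply: lime_le.
    by apply: is_cvg_nneseries => k _ _; rewrite lee_fin normr_ge0.
  apply: nearW => K; rewrite sumEFin lee_fin big_mkord.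
  exact: partial_bound.
rewrite -EFinM lee_fin mulrCA; apply: ler_piMr; first exact: (kappa_ge0 a0 a1).
by rewrite ler_pdivrMr ?ltr0n // mul1r ler_nat.
Qed.
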